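(* Let $\leq$ be an admissible bi-invariant total order on a group $G$. Then $\leq$ is a quasi-total order, and for every dominant $g\in G^{++}$ the growth function $\gamma_g:G\to\mathbb{R}$ is a group homomorphism.
   Context: A partial order $\leq$ on a group $G$ is bi-invariant if $g\leq h$ implies $gk\leq hk$ and $kg\leq kh$ for all $g,h,k$. $G^+=\{g: g\geq e\}$; the dominants are $G^{++}=\{g\in G^+\setminus\{e\}: \forall h\in G\ \exists n\in\mathbb{N}_0,\ g^n\geq h\}$; admissible means $G^{++}\neq\emptyset$. For $g\in G^{++}$, $\gamma_g(h)=\lim_{n\to\infty}\frac1n\inf\{p\in\mathbb{Z}: g^p\geq h^n\}$. A half-space filtration of a set $X$ is a family $\{H_n\}_{n\in\mathbb{Z}}$ of subsets with $H_{n+1}\subsetneq H_n$, $\bigcap H_n=\emptyset$, $\bigcup H_n=X$; the height is $h(a)=\sup\{n: a\in H_n\}$ and $h(a,b)=h(a)-h(b)$. $(X,\preceq,\{H_n\})$ is a half-space order if $(X,\preceq)$ is a poset, $\{H_n\}$ a half-space filtration, and for some constant $w$, $h(a,b)\geq w\Rightarrow a\succeq b$. A $G$-action on $X$ is by quasi-automorphisms if for some $d$, $|h(ga,gb)-h(a,b)|\leq d$ for all $g,a,b$; unbounded if some $g\in G,a\in X$ satisfy $h(g^na)\to\pm\infty$ as $n\to\pm\infty$. For an effective action, the induced order on $G$ is $g\leq h\Leftrightarrow\forall k\in G\,\forall x\in X:(kg).x\preceq(kh).x$. A quasi-total order on $G$ is an order induced from an effective, unbounded action by quasi-automorphisms on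 some half-space order. *)

(* Defs.v *)
From Stdlib Require Import ZArith Reals.

Set Implicit Arguments.

Record Group := {
  carrier :> Type;
  gmul : carrier -> carrier -> carrier;
  gone : carrier;
  ginv : carrier -> carrier;
  gmulA : forall x y z, gmul x (gmul y z) = gmul (gmul x y) z;
  gmul1l : forall x, gmul gone x = x;
  gmul1r : forall x, gmul x gone = x;
  gmulVl : forall x, gmul (ginv x) x = gone;
  gmulVr : forall x, gmul x (ginv x) = gone
}.

Arguments gmul {g} _ _.
Arguments gone {g}.
Arguments ginv {g} _.

Definition natpow {G : Group} (g : G) (n : nat) : G := Nat.iter n (gmul g) gone.

Definition zpow {G : Group} (g : G) (p : Z) : G :=
  match p with
  | Z0 => gone
  | Zpos q => natpow g (Pos.to_nat q)
  | Zneg q => ginv (natpow g (Pos.to_nat q))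
  end.

Definition partial_order (X : Type) (le : X -> X -> Prop) : Prop :=
  (forall x, le x x) /\
  (forall x y, le x y -> le y x -> x = y) /\
  (forall x y z, le x y -> le y z -> le x z).

Definition bi_invariant {G : Group} (le : G -> G -> Prop) : Prop :=
  partial_order le /\
  forall g h k : G, le g h -> le (gmul g k) (gmul h k) /\ le (gmul k g) (gmul k h).

Definition total_rel (X : Type) (le : X -> X -> Prop) : Prop :=
  forall x y, le x y \/ le y x.

Definition positive {G : Group} (le : G -> G -> Prop) (g : G) : Prop := le gone g.

Definition dominant {G : Group} (le : G -> G -> Prop) (g : G) : Prop :=
  positive le g /\ g <> gone /\ forall h : G, exists n : nat, le h (natpow g n).

Definition admissible {G : Group} (le : G -> G -> Prop) : Prop :=
  exists g : G, dominant le g.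

(** p is the infimum (= least element) of { p in Z : g^p >= h^n }. *)
Definition least_power {G : Group} (le : G -> G -> Prop) (g h : G) (n : nat) (p : Z)
  : Prop :=
  le (natpow h n) (zpow g p) /\
  forall q : Z, le (natpow h n) (zpow g q) -> (p <= q)%Z.

(** gamma_g(h) = r : (1/n) inf{p : g^p >= h^n} converges to r as n -> oo
    (the sequence is indexed by n >= 1). *)
Definition growth_limit {G : Group} (le : G -> G -> Prop) (g h : G) (r : R) : Prop :=
  exists a : nat -> Z,
    (forall n : nat, least_power le g h (S n) (a n)) /\
    Un_cv (fun n => (IZR (a n) / INR (S n))%R) r.

Definition half_space_filtration (X : Type) (H : Z -> X -> Prop) : Prop :=
  (forall n : Z, (forall x, H (n + 1)%Z x -> H n x) /\
                 exists x, H n x /\ ~ H (n + 1)%Z x) /\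
  (forall x, exists n, ~ H n x) /\
  (forall x, exists n, H n x).

(** k = h(a) = sup { n : a in H_n } (a maximum, since it is a set of integers). *)
Definition is_height (X : Type) (H : Z -> X -> Prop) (a : X) (k : Z) : Prop :=
  H k a /\ forall n : Z, H n a -> (n <= k)%Z.

Definition half_space_order (X : Type) (leX : X -> X -> Prop) (H : Z -> X -> Prop)
  : Prop :=
  partial_order leX /\ half_space_filtration H /\
  exists w : R, forall a b ka kb,
    is_height H a ka -> is_height H b kb -> (IZR (ka - kb) >= w)%R -> leX b a.

Definition is_action {G : Group} (X : Type) (act : G -> X -> X) : Prop :=
  (forall x, act gone x = x) /\
  (forall g h x, act (gmul g h) x = act g (act h x)).

Definition effective {G : Group} (X : Type) (act : G -> X -> X) : Prop :=
  forall g : G, (forall x, act g x = x) -> g = gone.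

Definition by_quasi_automorphisms {G : Group} (X : Type) (H : Z -> X -> Prop)
  (act : G -> X -> X) : Prop :=
  exists d : R, forall (g : G) a b ka kb kga kgb,
    is_height H a ka -> is_height H b kb ->
    is_height H (act g a) kga -> is_height H (act g b) kgb ->
    (Rabs (IZR ((kga - kgb) - (ka - kb))) <= d)%R.

Definition unbounded_action {G : Group} (X : Type) (H : Z -> X -> Prop)
  (act : G -> X -> X) : Prop :=
  exists (g : G) (a : X),
    (forall M : Z, exists N : Z, forall n : Z, (n >= N)%Z ->
       forall k, is_height H (act (zpow g n) a) k -> (k >= M)%Z) /\
    (forall M : Z, exists N : Z, forall n : Z, (n <= N)%Z ->
       forall k, is_height H (act (zpow g n) a) k -> (k <= M)%Z).

Definition induced_order {G : Group} (X : Type) (leX : X -> X -> Prop)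
  (act : G -> X -> X) (g h : G) : Prop :=
  forall (k : G) (x : X), leX (act (gmul k g) x) (act (gmul k h) x).

Definition quasi_total {G : Group} (le : G -> G -> Prop) : Prop :=
  exists (X : Type) (leX : X -> X -> Prop) (H : Z -> X -> Prop) (act : G -> X -> X),
    half_space_order leX H /\ is_action act /\ effective act /\
    by_quasi_automorphisms H act /\ unbounded_action H act /\
    forall g h : G, le g h <-> induced_order leX act g h.

(* Main.v *)
Require Import Defs.
From Stdlib Require Import ZArith Reals Lia Lra Classical ClassicalEpsilon.

Local Notation "x ** y" := (gmul x y) (at level 40, left associativity).

Lemma mul_cancel_r (G:Group) (x y z : G) : x ** z = y ** z -> x = y.
Proof.
  intro H. rewrite <- (gmul1r _ x), <- (gmul1r _ y), <- (gmulVr _ z), !gmulA, H. reflexivity.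
Qed.

Lemma mul_cancel_l (G:Group) (x y z : G) : z ** x = z ** y -> x = y.
Proof.
  intro H. rewrite <- (gmul1l _ x), <- (gmul1l _ y), <- (gmulVl _ z), <- !gmulA, H. reflexivity.
Qed.

Lemma inv_unique (G:Group) (x y : G) : x ** y = gone -> y = ginv x.
Proof.
  intro H. rewrite <- (gmul1l _ y), <- (gmulVl _ x), <- gmulA, H, gmul1r. reflexivity.
Qed.

Lemma inv_mul (G:Group) (x y : G) : ginv (x ** y) = ginv y ** ginv x.
Proof.
  symmetry. apply inv_unique.
  rewrite <- gmulA, (gmulA _ y), gmulVr, gmul1l, gmulVr. reflexivity.
Qed.

Lemma inv_one (G:Group) : ginv (@gone G) = gone.
Proof. symmetry. apply inv_unique. apply gmul1l. Qed.

Lemma natpow_S (G:Group) (g:G) n : natpow g (S n) = g ** natpow g n.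
Proof. reflexivity. Qed.

Lemma natpow_Sr (G:Group) (g:G) n : natpow g (S n) = natpow g n ** g.
Proof.
  induction n as [|n IH].
  - unfold natpow; simpl. rewrite gmul1r, gmul1l. reflexivity.
  - rewrite (natpow_S _ g (S n)), IH, gmulA, <- natpow_S, IH. reflexivity.
Qed.

Lemma natpow_add (G:Group) (g:G) m n : natpow g (m + n) = natpow g m ** natpow g n.
Proof.
  induction m as [|m IH].
  - simpl. unfold natpow at 2. simpl. rewrite gmul1l. reflexivity.
  - simpl plus. rewrite !natpow_S, IH, gmulA. reflexivity.
Qed.

Lemma zpow_of_nat (G:Group) (g:G) n : zpow g (Z.of_nat n) = natpow g n.
Proof.
  destruct n as [|n]. reflexivity.
  simpl. rewrite SuccNat2Pos.id_succ. reflexivity.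
Qed.

Lemma zpow_neg_nat (G:Group) (g:G) n : zpow g (- Z.of_nat n) = ginv (natpow g n).
Proof.
  destruct n as [|n]. simpl. symmetry. apply inv_one.
  simpl. rewrite SuccNat2Pos.id_succ. reflexivity.
Qed.

Lemma z_cases (p : Z) : (exists n, p = Z.of_nat n) \/ (exists n, p = (- Z.of_nat (S n))%Z).
Proof.
  destruct (Z_le_gt_dec 0 p).
  - left. exists (Z.to_nat p). lia.
  - right. exists (Z.to_nat (-p - 1)). lia.
Qed.

Lemma zpow_succ (G:Group) (g:G) p : zpow g (Z.succ p) = zpow g p ** g.
Proof.
  destruct (z_cases p) as [[n ->]|[n ->]].
  - rewrite <- Nat2Z.inj_succ, !zpow_of_nat, natpow_Sr. reflexivity.
  - replace (Z.succ (- Z.of_nat (S n))) with (- Z.of_nat n)%Z by lia.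
    rewrite !zpow_neg_nat, natpow_S, inv_mul, <- gmulA, gmulVl, gmul1r. reflexivity.
Qed.

Lemma zpow_pred (G:Group) (g:G) p : zpow g (Z.pred p) = zpow g p ** ginv g.
Proof.
  rewrite <- (Z.succ_pred p) at 2. rewrite zpow_succ, <- gmulA, gmulVr, gmul1r. reflexivity.
Qed.

Lemma zpow_add (G:Group) (g:G) p q : zpow g (p + q) = zpow g p ** zpow g q.
Proof.
  revert p. induction q using Z.peano_ind; intro p.
  - rewrite Z.add_0_r. simpl. rewrite gmul1r. reflexivity.
  - rewrite Z.add_succ_r, !zpow_succ, IHq, gmulA. reflexivity.
  - rewrite Z.add_pred_r, !zpow_pred, IHq, gmulA. reflexivity.
Qed.

Set Implicit Arguments.

Lemma bi_refl (G:Group) (le:G->G->Prop) : bi_invariant le -> forall x, le x x.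
Proof. intros [[H _] _]. exact H. Qed.
Lemma bi_antisym (G:Group) (le:G->G->Prop) : bi_invariant le -> forall x y, le x y -> le y x -> x = y.
Proof. intros [[_ [H _]] _]. exact H. Qed.
Lemma bi_trans (G:Group) (le:G->G->Prop) : bi_invariant le -> forall x y z, le x y -> le y z -> le x z.
Proof. intros [[_ [_ H]] _]. exact H. Qed.
Lemma mul_le_r (G:Group) (le:G->G->Prop) : bi_invariant le -> forall a b c, le a b -> le (a ** c) (b ** c).
Proof. intros [_ H] a b c Hab. apply (H a b c Hab). Qed.
Lemma mul_le_l (G:Group) (le:G->G->Prop) : bi_invariant le -> forall a b c, le a b -> le (c ** a) (c ** b).
Proof. intros [_ H] a b c Hab. apply (H a b c Hab). Qed.
Lemma mul_le (G:Group) (le:G->G->Prop) : bi_invariant le -> forall a b c d, le a b -> le c d -> le (a ** c) (b ** d).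
Proof.
  intros Hb a b c d H1 H2. apply (bi_trans Hb) with (b ** c).
  apply (mul_le_r Hb); auto. apply (mul_le_l Hb); auto.
Qed.
Lemma le_cancel_r (G:Group) (le:G->G->Prop) : bi_invariant le -> forall a b c, le (a ** c) (b ** c) -> le a b.
Proof.
  intros Hb a b c H. apply (mul_le_r Hb) with (c := ginv c) in H.
  rewrite <- !gmulA, gmulVr, !gmul1r in H. exact H.
Qed.
Lemma le_cancel_l (G:Group) (le:G->G->Prop) : bi_invariant le -> forall a b c, le (c ** a) (c ** b) -> le a b.
Proof.
  intros Hb a b c H. apply (mul_le_l Hb) with (c := ginv c) in H.
  rewrite !gmulA, gmulVl, !gmul1l in H. exact H.
Qed.

Definition glt (G:Group) (le:G->G->Prop) (a b : G) := le a b /\ a <> b.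
Arguments glt {G} le a b.

Lemma mul_lt_le (G:Group) (le:G->G->Prop) : bi_invariant le -> forall a b c d,
  glt le a b -> le c d -> glt le (a ** c) (b ** d).
Proof.
  intros Hb a b c d [H1 Hn] H2. split. apply (mul_le Hb); auto.
  intro E. apply Hn. apply mul_cancel_r with c. apply (bi_antisym Hb).
  apply (mul_le_r Hb); auto. rewrite E. apply (mul_le_l Hb); auto.
Qed.

Lemma lt_le_false (G:Group) (le:G->G->Prop) : bi_invariant le -> forall a b,
  glt le a b -> le b a -> False.
Proof. intros Hb a b [H1 Hn] H2. apply Hn. apply (bi_antisym Hb); auto. Qed.

Lemma not_le_lt (G:Group) (le:G->G->Prop) : bi_invariant le -> total_rel le -> forall x y,
  ~ le x y -> glt le y x.
Proof.
  intros Hb Ht x y H. destruct (Ht x y) as [H1|H1]. contradiction.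
  split; auto. intro E. subst. apply H, (bi_refl Hb).
Qed.

Lemma natpow_pos (G:Group) (le:G->G->Prop) (g:G) : bi_invariant le -> le gone g ->
  forall n, le gone (natpow g n).
Proof.
  intros Hb Hg n. induction n as [|n IH]. apply (bi_refl Hb).
  rewrite natpow_S, <- (gmul1l _ gone). apply (mul_le Hb); auto.
Qed.

Lemma zpow_mono (G:Group) (le:G->G->Prop) (g:G) : bi_invariant le -> le gone g ->
  forall p q, (p <= q)%Z -> le (zpow g p) (zpow g q).
Proof.
  intros Hb Hg p q Hpq. replace q with (p + Z.of_nat (Z.to_nat (q - p)))%Z by lia.
  rewrite zpow_add, zpow_of_nat. rewrite <- (gmul1r _ (zpow g p)) at 1.
  apply (mul_le_l Hb). apply natpow_pos; auto.
Qed.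

Lemma zpow_strict (G:Group) (le:G->G->Prop) (g:G) : bi_invariant le -> dominant le g ->
  forall p q, le (zpow g q) (zpow g p) -> (q <= p)%Z.
Proof.
  intros Hb [Hg [Hne _]] p q H. destruct (Z_le_gt_dec q p) as [|Hlt]; auto. exfalso.
  replace q with (p + Z.of_nat (S (Z.to_nat (q - p - 1))))%Z in H by lia.
  rewrite zpow_add, zpow_of_nat, natpow_S in H.
  rewrite <- (gmul1r _ (zpow g p)) in H at 2.
  apply (le_cancel_l Hb) in H.
  apply Hne. apply (bi_antisym Hb); auto.
  apply (bi_trans Hb) with (g ** natpow g (Z.to_nat (q - p - 1))); auto.
  rewrite <- (gmul1r _ g) at 1. apply (mul_le_l Hb). apply natpow_pos; auto.
Qed.

Definition Fp {G:Group} (le:G->G->Prop) (g x : G) (p : Z) : Prop :=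
  le x (zpow g p) /\ forall q, le x (zpow g q) -> (p <= q)%Z.

Lemma min_exists (P : Z -> Prop) (b : Z) : (forall q, P q -> (b <= q)%Z) ->
  forall a, P a -> exists p, P p /\ forall q, P q -> (p <= q)%Z.
Proof.
  intros Hb a. remember (Z.to_nat (a - b)) as n eqn:En. revert a En.
  induction n as [n IH] using (well_founded_induction lt_wf). intros a En Pa.
  destruct (classic (exists q, P q /\ (q < a)%Z)) as [[q [Pq Hq]]|Hno].
  - apply (IH (Z.to_nat (q - b))) with q; auto. specialize (Hb q Pq). lia.
  - exists a. split; auto. intros q Pq. destruct (Z_le_gt_dec a q); auto.
    exfalso. apply Hno. exists q. split; auto. lia.
Qed.

Lemma F_exists (G:Group) (le:G->G->Prop) (g:G) : bi_invariant le -> dominant le g ->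
  forall x, exists p, Fp le g x p.
Proof.
  intros Hb Hd x. pose proof Hd as [Hg [Hne Hdom]].
  destruct (Hdom x) as [n Hn]. destruct (Hdom (ginv x)) as [m Hm].
  assert (L : le (zpow g (- Z.of_nat m)) x).
  { apply (mul_le_l Hb) with (c := x) in Hm. rewrite gmulVr in Hm.
    apply (mul_le_r Hb) with (c := zpow g (- Z.of_nat m)) in Hm.
    rewrite gmul1l, <- gmulA, <- zpow_of_nat, <- zpow_add, Z.add_opp_diag_r in Hm.
    simpl in Hm. rewrite gmul1r in Hm. exact Hm. }
  apply (@min_exists (fun q => le x (zpow g q)) (- Z.of_nat m)%Z) with (Z.of_nat n).
  - intros q Hq. apply (zpow_strict Hb Hd). apply (bi_trans Hb) with x; auto.
  - rewrite zpow_of_nat. exact Hn.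
Qed.

Lemma F_unique (G:Group) (le:G->G->Prop) (g x:G) p q : Fp le g x p -> Fp le g x q -> p = q.
Proof. intros [H1 H2] [H3 H4]. specialize (H2 q H3). specialize (H4 p H1). lia. Qed.

Lemma F_mono (G:Group) (le:G->G->Prop) (g x y:G) p q : bi_invariant le ->
  le x y -> Fp le g x p -> Fp le g y q -> (p <= q)%Z.
Proof. intros Hb Hxy [H1 H2] [H3 H4]. apply H2. apply (bi_trans Hb) with y; auto. Qed.

Lemma F_sub (G:Group) (le:G->G->Prop) (g x y:G) a b c : bi_invariant le ->
  Fp le g x a -> Fp le g y b -> Fp le g (x ** y) c -> (c <= a + b)%Z.
Proof.
  intros Hb [H1 _] [H3 _] [_ H5]. apply H5. rewrite zpow_add. apply (mul_le Hb); auto.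
Qed.

Lemma F_super (G:Group) (le:G->G->Prop) (g x y:G) a b c : bi_invariant le -> total_rel le ->
  dominant le g ->
  Fp le g x a -> Fp le g y b -> Fp le g (x ** y) c -> (a + b - 1 <= c)%Z.
Proof.
  intros Hb Ht Hd [H1 H2] [H3 H4] [H5 H6].
  destruct (Z_le_gt_dec (a + b - 1) c) as [|Hlt]; auto. exfalso.
  assert (A : glt le (zpow g (a - 1)) x).
  { apply (not_le_lt Hb Ht). intro E. specialize (H2 _ E). lia. }
  assert (B : le (zpow g (b - 1)) y).
  { destruct (Ht (zpow g (b-1)) y) as [E|E]; auto. specialize (H4 _ E). lia. }
  pose proof (@mul_lt_le _ _ Hb _ _ _ _ A B) as C. rewrite <- zpow_add in C.
  apply (@lt_le_false _ _ Hb _ _ C). apply (bi_trans Hb) with (zpow g c); auto.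
  apply (zpow_mono g Hb (proj1 Hd)). lia.
Qed.

Lemma F_zpow (G:Group) (le:G->G->Prop) (g:G) n : bi_invariant le -> dominant le g ->
  Fp le g (zpow g n) n.
Proof.
  intros Hb Hd. split. apply (bi_refl Hb). intros q Hq. apply (zpow_strict Hb Hd). exact Hq.
Qed.

Definition Hs {G:Group} (le:G->G->Prop) (g:G) (n:Z) (x:G) : Prop := ~ le x (zpow g (n - 1)).

Lemma height_F (G:Group) (le:G->G->Prop) (g x:G) k : bi_invariant le -> dominant le g ->
  is_height (Hs le g) x k -> Fp le g x k.
Proof.
  intros Hb Hd [H1 H2]. unfold Hs in *. split.
  - apply NNPP. intro E. specialize (H2 (k+1)%Z). replace (k + 1 - 1)%Z with k in H2 by lia.
    specialize (H2 E). lia.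
  - intros q Hq. destruct (Z_le_gt_dec k q) as [|Hlt]; auto. exfalso. apply H1.
    apply (bi_trans Hb) with (zpow g q); auto. apply (zpow_mono g Hb (proj1 Hd)). lia.
Qed.

Lemma part1 (G:Group) (le:G->G->Prop) (g:G) : bi_invariant le -> total_rel le ->
  dominant le g -> quasi_total le.
Proof.
  intros Hb Ht Hd.
  assert (Fex := F_exists Hb Hd).
  exists (carrier G), le, (Hs le g), (fun a x => a ** x).
  split; [|split; [|split; [|split; [|split]]]].
  - split. exact (proj1 Hb). split.
    + split; [|split].
      * intro n. split.
        -- intros x Hx E. apply Hx. apply (bi_trans Hb) with (zpow g (n-1)); auto.
           apply (zpow_mono g Hb (proj1 Hd)). lia.
        -- exists (zpow g n). unfold Hs. split.
           ++ intro E. apply (zpow_strict Hb Hd) in E. lia.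
           ++ intro E. apply E. replace (n + 1 - 1)%Z with n by lia. apply (bi_refl Hb).
      * intro x. destruct (Fex x) as [p [H1 H2]]. exists (p + 1)%Z. unfold Hs.
        replace (p + 1 - 1)%Z with p by lia. tauto.
      * intro x. destruct (Fex x) as [p [H1 H2]]. exists p. unfold Hs. intro E.
        specialize (H2 _ E). lia.
    + exists 1%R. intros a b ka kb Ha Hb' Hw.
      apply (height_F Hb Hd) in Ha. apply (height_F Hb Hd) in Hb'.
      apply Rge_le in Hw. apply le_IZR in Hw.
      destruct Ha as [Ha1 Ha2]. destruct Hb' as [Hb1 Hb2].
      apply (bi_trans Hb) with (zpow g kb); auto.
      apply (bi_trans Hb) with (zpow g (ka - 1)).
      apply (zpow_mono g Hb (proj1 Hd)). lia.
      destruct (Ht a (zpow g (ka - 1))) as [E|E]; auto. specialize (Ha2 _ E). lia.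
  - split. intro x. apply gmul1l. intros a b x. symmetry. apply gmulA.
  - intros a Ha. specialize (Ha gone). rewrite gmul1r in Ha. exact Ha.
  - exists 1%R. intros k a b ka kb kga kgb Ha Hb' Hga Hgb.
    apply (height_F Hb Hd) in Ha, Hb', Hga, Hgb.
    destruct (Fex k) as [p Hp].
    pose proof (F_sub Hb Hp Ha Hga). pose proof (F_sub Hb Hp Hb' Hgb).
    pose proof (F_super Hb Ht Hd Hp Ha Hga). pose proof (F_super Hb Ht Hd Hp Hb' Hgb).
    rewrite Rabs_Zabs. apply IZR_le. lia.
  - exists g, gone. split.
    + intro M. exists M. intros n Hn k Hk. apply (height_F Hb Hd) in Hk.
      rewrite gmul1r in Hk. rewrite (F_unique Hk (F_zpow n Hb Hd)). exact Hn.
    + intro M. exists M. intros n Hn k Hk. apply (height_F Hb Hd) in Hk.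
      rewrite gmul1r in Hk. rewrite (F_unique Hk (F_zpow n Hb Hd)). exact Hn.
  - intros a b. unfold induced_order. split.
    + intros H k x. apply (mul_le_r Hb). apply (mul_le_l Hb). exact H.
    + intros H. specialize (H gone gone). rewrite !gmul1r, !gmul1l in H. exact H.
Qed.

Lemma lemA (G:Group) (le:G->G->Prop) (h k:G) : bi_invariant le -> le (h ** k) (k ** h) ->
  forall n, le (h ** natpow k n) (natpow k n ** h).
Proof.
  intros Hb Hhk n. induction n as [|n IH].
  - simpl. unfold natpow; simpl. rewrite gmul1r, gmul1l. apply (bi_refl Hb).
  - rewrite natpow_Sr. apply (bi_trans Hb) with (natpow k n ** h ** k).
    + rewrite gmulA. apply (mul_le_r Hb). exact IH.
    + rewrite <- !gmulA. apply (mul_le_l Hb). exact Hhk.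
Qed.

Lemma lemB (G:Group) (le:G->G->Prop) (h k:G) : bi_invariant le -> le (h ** k) (k ** h) ->
  forall n, le (natpow h n ** k) (k ** natpow h n).
Proof.
  intros Hb Hhk n. induction n as [|n IH].
  - simpl. unfold natpow; simpl. rewrite gmul1r, gmul1l. apply (bi_refl Hb).
  - rewrite natpow_S. apply (bi_trans Hb) with (h ** (k ** natpow h n)).
    + rewrite <- gmulA. apply (mul_le_l Hb). exact IH.
    + rewrite !gmulA. apply (mul_le_r Hb). exact Hhk.
Qed.

Lemma sand (G:Group) (le:G->G->Prop) (h k:G) : bi_invariant le -> le (h ** k) (k ** h) ->
  forall n, le (natpow h n ** natpow k n) (natpow (h ** k) n) /\
            le (natpow (h ** k) n) (natpow k n ** natpow h n).
Proof.
  intros Hb Hhk n. induction n as [|n [IH1 IH2]].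
  - unfold natpow; simpl. rewrite gmul1r. split; apply (bi_refl Hb).
  - rewrite !natpow_Sr. split.
    + apply (bi_trans Hb) with (natpow h n ** (natpow k n ** h) ** k).
      * replace (natpow h n ** h ** (natpow k n ** k)) with
          (natpow h n ** (h ** natpow k n) ** k) by (rewrite !gmulA; reflexivity).
        apply (mul_le_r Hb). apply (mul_le_l Hb). apply lemA; auto.
      * replace (natpow h n ** (natpow k n ** h) ** k) with
          (natpow h n ** natpow k n ** (h ** k)) by (rewrite !gmulA; reflexivity).
        apply (mul_le_r Hb). exact IH1.
    + apply (bi_trans Hb) with (natpow k n ** natpow h n ** (h ** k)).
      * apply (mul_le_r Hb). exact IH2.
      * replace (natpow k n ** natpow h n ** (h ** k)) with
          (natpow k n ** ((natpow h n ** h) ** k)) by (rewrite !gmulA; reflexivity).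
        replace (natpow k n ** k ** (natpow h n ** h)) with
          (natpow k n ** (k ** (natpow h n ** h))) by (rewrite !gmulA; reflexivity).
        apply (mul_le_l Hb). rewrite <- natpow_Sr. apply lemB; auto.
Qed.

Lemma flip_bi (G:Group) (le:G->G->Prop) : bi_invariant le -> bi_invariant (fun x y => le y x).
Proof.
  intros [[H1 [H2 H3]] H4]. split. split; [|split].
  - exact H1.
  - intros x y A B. apply H2; auto.
  - intros x y z A B. apply H3 with y; auto.
  - intros g h k A. apply H4. exact A.
Qed.

Lemma sand2 (G:Group) (le:G->G->Prop) (h k:G) n : bi_invariant le -> total_rel le ->
  (le (natpow h n ** natpow k n) (natpow (h ** k) n) /\
   le (natpow (h ** k) n) (natpow k n ** natpow h n)) \/
  (le (natpow k n ** natpow h n) (natpow (h ** k) n) /\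
   le (natpow (h ** k) n) (natpow h n ** natpow k n)).
Proof.
  intros Hb Ht. destruct (Ht (h ** k) (k ** h)) as [E|E].
  - left. apply sand; auto.
  - right. destruct (@sand G (fun x y => le y x) h k (flip_bi Hb) E n) as [A B]. auto.
Qed.

Lemma inv_small (eps : R) : (eps > 0)%R -> exists N, forall n, (n >= N)%nat -> (/ INR (S n) < eps)%R.
Proof.
  intros He. destruct (archimed (/ eps)) as [A _].
  assert (Hi : (/ eps > 0)%R) by (apply Rinv_0_lt_compat; lra).
  exists (Z.to_nat (up (/ eps))). intros n Hn.
  assert (Hup : (0 <= up (/ eps))%Z).
  { apply le_IZR. lra. }
  assert (E : (INR (Z.to_nat (up (/eps))) = IZR (up (/eps)))%R).
  { rewrite INR_IZR_INZ, Z2Nat.id; auto. }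
  assert (L : (INR (Z.to_nat (up (/eps))) <= INR n)%R) by (apply le_INR; lia).
  rewrite S_INR.
  rewrite <- (Rinv_inv eps).
  apply Rinv_lt_contravar.
  - apply Rmult_lt_0_compat; auto. pose proof (pos_INR n). lra.
  - lra.
Qed.

Lemma c_mul (c : nat -> Z) (H0 : c 0%nat = 0%Z)
  (Hq : forall m n, (c m + c n - 1 <= c (m + n)%nat <= c m + c n)%Z) :
  forall n m, (Z.of_nat n * c m - Z.of_nat n <= c (n * m)%nat <= Z.of_nat n * c m)%Z.
Proof.
  intros n m. induction n as [|n IH].
  - simpl. rewrite H0. lia.
  - simpl Nat.mul. specialize (Hq m (n * m)%nat). rewrite Nat2Z.inj_succ. lia.
Qed.

Lemma cauchy_quasi (c : nat -> Z) (H0 : c 0%nat = 0%Z)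
  (Hq : forall m n, (c m + c n - 1 <= c (m + n)%nat <= c m + c n)%Z) :
  Cauchy_crit (fun n => (IZR (c (S n)) / INR (S n))%R).
Proof.
  intros eps He. destruct (@inv_small (eps/2)%R) as [N HN]. lra.
  exists N. intros n m Hn Hm. unfold R_dist.
  pose proof (HN n Hn) as X. pose proof (HN m Hm) as Y.
  pose proof (@c_mul c H0 Hq (S m) (S n)) as I1. pose proof (@c_mul c H0 Hq (S n) (S m)) as I2.
  rewrite Nat.mul_comm in I2.
  assert (Z1 : (- (Z.of_nat (S n) + Z.of_nat (S m)) <=
     Z.of_nat (S m) * c (S n) - Z.of_nat (S n) * c (S m) <= Z.of_nat (S n) + Z.of_nat (S m))%Z) by lia.
  destruct Z1 as [Z1 Z2]. apply IZR_le in Z1, Z2.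
  rewrite opp_IZR, plus_IZR, minus_IZR, !mult_IZR, <- !INR_IZR_INZ in Z1.
  rewrite plus_IZR, minus_IZR, !mult_IZR, <- !INR_IZR_INZ in Z2.
  set (a := INR (S n)) in *. set (b := INR (S m)) in *.
  set (A := IZR (c (S n))) in *. set (B := IZR (c (S m))) in *.
  assert (Ha : (a > 0)%R) by (apply lt_0_INR; lia).
  assert (Hb : (b > 0)%R) by (apply lt_0_INR; lia).
  assert (E : (A / a - B / b = (b * A - a * B) * (/ a * / b))%R) by (field; lra).
  assert (E2 : (/ a + / b = (a + b) * (/ a * / b))%R) by (field; lra).
  assert (P : (/ a * / b > 0)%R).
  { apply Rmult_lt_0_compat; apply Rinv_0_lt_compat; lra. }
  rewrite E. rewrite Rabs_mult, (Rabs_pos_eq (/ a * / b)) by lra.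
  apply Rle_lt_trans with ((a + b) * (/ a * / b))%R.
  - apply Rmult_le_compat_r. lra. apply Rabs_le. lra.
  - rewrite <- E2. lra.
Qed.

Lemma additive_limit (al be de : nat -> Z) (la lb ld : R)
  (Hbd : forall n, (be n + de n - 1 <= al n <= be n + de n)%Z)
  (Ha : Un_cv (fun n => IZR (al n) / INR (S n))%R la)
  (Hb : Un_cv (fun n => IZR (be n) / INR (S n))%R lb)
  (Hd : Un_cv (fun n => IZR (de n) / INR (S n))%R ld) : la = (lb + ld)%R.
Proof.
  apply UL_sequence with (1 := Ha). intros eps He.
  destruct (Hb (eps/3)%R) as [N1 H1]. lra. destruct (Hd (eps/3)%R) as [N2 H2]. lra.
  destruct (@inv_small (eps/3)%R) as [N3 H3]. lra.
  exists (max (max N1 N2) N3). intros n Hn. unfold R_dist in *.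
  specialize (H1 n ltac:(lia)). specialize (H2 n ltac:(lia)). specialize (H3 n ltac:(lia)).
  destruct (Hbd n) as [Z1 Z2]. apply IZR_le in Z1, Z2.
  rewrite minus_IZR, plus_IZR in Z1. rewrite plus_IZR in Z2.
  unfold Rdiv in *.
  set (x := (/ INR (S n))%R) in *.
  assert (Hx : (x > 0)%R) by (apply Rinv_0_lt_compat, lt_0_INR; lia).
  set (A := IZR (al n)) in *. set (B := IZR (be n)) in *. set (D := IZR (de n)) in *.
  assert (U1 : (A * x <= B * x + D * x)%R) by nra.
  assert (U2 : (B * x + D * x - x <= A * x)%R) by nra.
  apply Rabs_def2 in H1. apply Rabs_def2 in H2. apply Rabs_def1; lra.
Qed.

Theorem proposition1p4 (G : Group) (le : G -> G -> Prop) :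
  bi_invariant le -> total_rel le -> admissible le ->
  quasi_total le /\
  forall g : G, dominant le g ->
    exists gamma : G -> R,
      (forall h : G, growth_limit le g h (gamma h)) /\
      (forall h k : G, gamma (gmul h k) = (gamma h + gamma k)%R).
Proof.
  intros Hb Ht [g0 Hg0]. split.
  { apply (part1 Hb Ht Hg0). }
  intros g Hg.
  pose (f := fun x => proj1_sig (constructive_indefinite_description _ (F_exists Hb Hg x))).
  assert (Hf : forall x, Fp le g x (f x)).
  { intro x. unfold f. apply proj2_sig. }
  assert (H0 : forall h, f (natpow h 0) = 0%Z).
  { intro h. apply (F_unique (Hf _)). exact (F_zpow 0%Z Hb Hg). }
  assert (Hq : forall h m n, (f (natpow h m) + f (natpow h n) - 1 <= f (natpow h (m + n)%nat)
                              <= f (natpow h m) + f (natpow h n))%Z).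
  { intros h m n. rewrite natpow_add. split.
    - exact (F_super Hb Ht Hg (Hf _) (Hf _) (Hf _)).
    - exact (F_sub Hb (Hf _) (Hf _) (Hf _)). }
  assert (Hc : forall h, Cauchy_crit (fun n => (IZR (f (natpow h (S n))) / INR (S n))%R)).
  { intro h. exact (@cauchy_quasi (fun m => f (natpow h m)) (H0 h) (Hq h)). }
  exists (fun h => proj1_sig (R_complete _ (Hc h))). split.
  - intro h. exists (fun n => f (natpow h (S n))). split.
    + intro n. apply Hf.
    + apply proj2_sig.
  - intros h k.
    apply additive_limit with (al := fun n => f (natpow (h ** k) (S n)))
      (be := fun n => f (natpow h (S n))) (de := fun n => f (natpow k (S n)));
      try apply proj2_sig.
    intro n.
    pose proof (F_sub Hb (Hf (natpow h (S n))) (Hf (natpow k (S n))) (Hf _)).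
    pose proof (F_super Hb Ht Hg (Hf (natpow h (S n))) (Hf (natpow k (S n))) (Hf _)).
    pose proof (F_sub Hb (Hf (natpow k (S n))) (Hf (natpow h (S n))) (Hf _)).
    pose proof (F_super Hb Ht Hg (Hf (natpow k (S n))) (Hf (natpow h (S n))) (Hf _)).
    destruct (@sand2 G le h k (S n) Hb Ht) as [[A B]|[A B]].
    + pose proof (F_mono Hb A (Hf _) (Hf _)). pose proof (F_mono Hb B (Hf _) (Hf _)). lia.
    + pose proof (F_mono Hb A (Hf _) (Hf _)). pose proof (F_mono Hb B (Hf _) (Hf _)). lia.
Qed.
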